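(* Assume $\operatorname{add}(\mathcal N)=\operatorname{cov}(\mathcal N)$. Then $\mathcal{NM}_{\operatorname{add}(\mathcal N)}$, $\mathcal{NF}_{\operatorname{add}(\mathcal N)}$ and $\mathcal{ND}_{\operatorname{add}(\mathcal N)}$ are positively $2^{\mathfrak c}$-coneable in $\left(\mathbb R^{[0,1]}\right)^{\operatorname{add}(\mathcal N)}$.
   Context: For a regular infinite cardinal $\kappa$ (ordinals $<\kappa$ with usual order), a $\kappa$-sequence $(x_\alpha)_{\alpha<\kappa}$ converges to $x$ if for every neighbourhood $U$ of $x$ there is $\alpha_0<\kappa$ with $x_\alpha\in U$ for all $\alpha_0<\alpha<\kappa$; $\left(\mathbb R^{[0,1]}\right)^{\kappa}$ is the real vector space of $\kappa$-sequences of functions $[0,1]\to\mathbb R$ with indexwise operations. $\lambda$ is Lebesgue measure, $\mathcal N$ the null subsets of $[0,1]$; $\operatorname{add}(\mathcal N)$ is the least cardinality of a family of null sets whose union is not null (a regular cardinal), $\operatorname{cov}(\mathcal N)$ the least cardinality of a family of null sets covering $[0,1]$. For bounded transfinite sequences of reals, $\liminf$ is the infimum of cluster points. $\mathcal{NM}_{\kappa}$: $\kappa$-sequences of Lebesgue measurable $f_\alpha:[0,1]\to\mathbb R$ with $0\le f_\alpha\le f_\beta$ a.e. for $\alpha\le\beta$, converging a.e. to an integrable $f$, with $\int f_\alpha\,d\lambda$ not converging to $\int f\,d\lambda$. $\mathcal{NF}_{\kappa}$: $\kappa$-sequences of Lebesgue measurable $f_\alpha\ge0$ a.e. with $\liminf_\alpha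 f_\alpha$ integrable and $\int\liminf_\alpha f_\alpha\,d\lambda>\liminf_\alpha\int f_\alpha\,d\lambda$. $\mathcal{ND}_{\kappa}$: $\kappa$-sequences of Lebesgue measurable $f_\alpha:[0,1]\to\mathbb R$ dominated a.e. by a common integrable $g$, converging a.e. to an integrable $f$, with $\int|f_\alpha-f|\,d\lambda\not\to0$. $S$ is positively $\mu$-coneable if there is a linearly independent $B\subset S$ of cardinality $\mu$ all of whose finite combinations with positive coefficients lie in $S$. *)

(* Defs.v *)
From HB Require Import structures.
From mathcomp Require Import all_boot all_order all_algebra.
From mathcomp Require Import all_classical all_reals all_analysis.
Set Implicit Arguments. Unset Strict Implicit. Unset Printing Implicit Defensive.
Import Order.TTheory GRing.Theory Num.Theory.
Import numFieldNormedType.Exports.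
Local Open Scope classical_set_scope.
Local Open Scope ring_scope.

(* Lebesgue measure on R: the completed Lebesgue measure, so that "measurable"
   below means Lebesgue measurable.  The unit interval is `[0,1]. *)
Notation leb R := (@completed_lebesgue_measure R).
Notation I01 := (`[0%R, 1%R]%classic).

Definition card_le (A B : Type) : Prop := exists f : A -> B, injective f.
Definition card_lt (A B : Type) : Prop := card_le A B /\ ~ card_le B A.

Definition null_set {R : realType} (A : set R) : Prop :=
  A `<=` I01 /\ (leb R).-negligible A.

(* |I| = add(N) : some I-indexed family of null sets has non-null union,
   and every family indexed by a type of smaller cardinality has null union. *)
Definition is_addN (R : realType) (I : Type) : Prop :=
  (exists N : I -> set R, (forall i, null_set (N i)) /\
                          ~ null_set (\bigcup_i N i)) /\
  (forall (J : Type) (N : J -> set R), card_lt J I ->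
      (forall j, null_set (N j)) -> null_set (\bigcup_j N j)).

(* |I| = cov(N) : some I-indexed family of null sets covers [0,1],
   and no family indexed by a type of smaller cardinality does. *)
Definition is_covN (R : realType) (I : Type) : Prop :=
  (exists N : I -> set R, (forall i, null_set (N i)) /\
                          I01 `<=` \bigcup_i N i) /\
  (forall (J : Type) (N : J -> set R), card_lt J I ->
      (forall j, null_set (N j)) -> ~ (I01 `<=` \bigcup_j N j)).

(* lt is a strict well-order on I all of whose proper initial segments have
   cardinality smaller than I; hence (I, lt) is order-isomorphic to the
   initial ordinal |I| (with its usual order). *)
Definition initial_well_order (I : Type) (lt : I -> I -> Prop) : Prop :=
  [/\ (forall x, ~ lt x x),
      (forall x y z, lt x y -> lt y z -> lt x z),
      (forall x y, [\/ x = y, lt x y | lt y x]),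
      well_founded lt &
      (forall i, ~ card_le I {j : I | lt j i})].

Definition kconv (I : Type) (lt : I -> I -> Prop) (T : topologicalType)
  (u : I -> T) (l : T) : Prop :=
  forall U, nbhs l U -> exists a0, forall a, lt a0 a -> U (u a).

Definition kcluster (I : Type) (lt : I -> I -> Prop) (T : topologicalType)
  (u : I -> T) (l : T) : Prop :=
  forall U, nbhs l U -> forall a0, exists a, lt a0 a /\ U (u a).

(* liminf = infimum of the cluster points (taken in the extended reals,
   which agrees with the real liminf for bounded sequences). *)
Definition kliminf (R : realType) (I : Type) (lt : I -> I -> Prop)
  (u : I -> \bar R) : \bar R :=
  ereal_inf [set l : \bar R | kcluster lt u l].

Definition ae01 (R : realType) (P : R -> Prop) : Prop :=
  {ae leb R, forall x, I01 x -> P x}.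



(* the measurable space of Lebesgue measurable subsets of R
   (the domain of the completed Lebesgue measure) *)
Definition LebT (R : realType) :=
  caratheodory_type ((@wlength R idfun)^*%mu).

Definition leb_measurable (R : realType) (f : R -> R) : Prop :=
  measurable_fun (I01 : set (LebT R)) (f : LebT R -> R).

Definition leb_integrable (R : realType) (f : R -> \bar R) : Prop :=
  (leb R).-integrable (I01 : set (LebT R)) (f : LebT R -> \bar R).

Definition int01 (R : realType) (f : R -> \bar R) : \bar R :=
  (\int[leb R]_(x in (I01 : set (LebT R))) f x)%E.

(* A kappa-sequence of functions [0,1] -> R is f : I -> R -> R (only the
   values on [0,1] are relevant to the conditions below). *)

Definition NM (R : realType) (I : Type) (lt : I -> I -> Prop)
  (f : I -> R -> R) : Prop :=
  [/\ (forall a, leb_measurable (f a)),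
      (forall a b, a = b \/ lt a b -> ae01 (fun x => 0 <= f a x <= f b x)) &
      exists g : R -> R,
        [/\ leb_integrable (EFin \o g),
            ae01 (fun x => kconv lt (fun a => f a x) (g x)) &
            ~ kconv lt (fun a => int01 (EFin \o f a)) (int01 (EFin \o g))]].

Definition NF (R : realType) (I : Type) (lt : I -> I -> Prop)
  (f : I -> R -> R) : Prop :=
  [/\ (forall a, leb_measurable (f a)),
      (forall a, ae01 (fun x => 0 <= f a x)),
      leb_integrable (fun x => kliminf lt (fun a => (f a x)%:E)) &
      (kliminf lt (fun a => int01 (EFin \o f a))
        < int01 (fun x => kliminf lt (fun a => (f a x)%:E)))%E].

Definition ND (R : realType) (I : Type) (lt : I -> I -> Prop)
  (f : I -> R -> R) : Prop :=
  [/\ (forall a, leb_measurable (f a)),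
      (exists g : R -> R, leb_integrable (EFin \o g) /\
         forall a, ae01 (fun x => `|f a x| <= g x)) &
      exists h : R -> R,
        [/\ leb_integrable (EFin \o h),
            ae01 (fun x => kconv lt (fun a => f a x) (h x)) &
            ~ kconv lt (fun a => int01 (fun x => (`|f a x - h x|)%:E)) 0%E]].

Definition card_eq (A B : Type) : Prop := card_le A B /\ card_le B A.

(* S is positively 2^c-coneable in (R^[0,1])^I: there is a linearly
   independent B included in S, with |B| = |P(R)| = 2^c, all of whose finite
   (nonempty) combinations of distinct elements with positive coefficients lie
   in S.  Elements of R^[0,1] are represented by functions R -> R vanishing
   outside [0,1]. *)
Definition pos_coneable_2c (R : realType) (I : Type)
  (S : (I -> R -> R) -> Prop) : Prop :=
  exists B : set (I -> R -> R),
    [/\ (forall b, B b -> forall a x, ~ I01 x -> b a x = 0),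
        card_eq {b | B b} (set R),
        (forall (n : nat) (b : 'I_n -> I -> R -> R) (c : 'I_n -> R),
           injective b -> (forall k, B (b k)) ->
           (fun a x => \sum_(k < n) c k * b k a x) = (fun _ _ => 0) ->
           forall k, c k = 0) &
        (forall (n : nat) (b : 'I_n.+1 -> I -> R -> R) (c : 'I_n.+1 -> R),
           injective b -> (forall k, B (b k)) -> (forall k, 0 < c k) ->
           S (fun a x => \sum_(k < n.+1) c k * b k a x))].

(* Main.v *)
Require Import Defs.
From HB Require Import structures.
From mathcomp Require Import all_boot all_order all_algebra.
From mathcomp Require Import all_classical all_reals all_analysis.
From mathcomp Require Import measurable_realfun.
Set Implicit Arguments. Unset Strict Implicit. Unset Printing Implicit Defensive.
Import Order.TTheory GRing.Theory Num.Theory.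
Import numFieldNormedType.Exports.
Local Open Scope classical_set_scope.
Local Open Scope ring_scope.
From mathcomp Require Import ring lra.
From Stdlib Require Cantor.
Section P1. Variable R : realType.
Local Open Scope ereal_scope.
Lemma leb01 : leb R I01 = 1%E.
Proof.
have := @lebesgue_measure_itv R `[0%R,1%R]; rewrite /= lte01 sube0 => <-; reflexivity.
Qed.

Lemma mI01 : measurable (I01 : set (LebT R)).
Proof. apply: sub_caratheodory; exact: measurable_itv. Qed.

Lemma negl_meas (Z : set R) : (leb R).-negligible Z -> measurable (Z : set (LebT R)).
Proof. exact: completed_lebesgue_measure_is_complete. Qed.

Lemma outer0_negl (Z : set R) : ((@wlength R idfun)^*%mu Z = 0) -> (leb R).-negligible Z.
Proof.
move=> Z0; exists Z; split => //.
apply: le_caratheodory_measurable => X.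
have H : forall Y, Y `<=` Z -> (@wlength R idfun)^*%mu Y = 0.
  move=> Y YZ; apply/eqP; rewrite eq_le outer_measure_ge0 andbT -Z0.
  exact: le_outer_measure.
change ((@wlength R idfun)^*%mu (X `&` Z) + (@wlength R idfun)^*%mu (X `&` ~` Z) <= (@wlength R idfun)^*%mu X).
rewrite (H (X `&` Z)); last by move=> ? [].
by rewrite add0e le_outer_measure // => x [].
Qed.

Lemma aeI (P : R -> Prop) (Z : set R) : (leb R).-negligible Z ->
  (forall x, I01 x -> ~ Z x -> P x) -> ae01 P.
Proof.
move=> nZ HP; apply: (negligibleS _ nZ) => x /= nx.
apply: contrapT => Zx; apply: nx => I0x; exact: HP.
Qed.
Lemma meas_aecst d (T : measurableType d) (f : R -> T) (c : T) (Z : set R) :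
  (leb R).-negligible Z -> (forall x, I01 x -> ~ Z x -> f x = c) ->
  measurable_fun (I01 : set (LebT R)) (f : LebT R -> T).
Proof.
move=> nZ Hf _ Y mY.
have -> : (I01 : set (LebT R)) `&` (f : LebT R -> T) @^-1` Y =
   ((I01 `\` Z) `&` [set _ : LebT R | Y c]) `|` (I01 `&` Z `&` f @^-1` Y).
  apply/seteqP; split => x.
  - move=> [Ix Yx]; have [Zx|nZx] := pselect (Z x); first by right.
    by left; split; [split|] => //=; rewrite -(Hf x).
  - by case => [[[Ix nZx] Yc]|[[Ix Zx] Yx]]; split=> //; rewrite /preimage /= Hf.
apply: measurableU.
- apply: measurableI; first by apply: measurableD; [exact: mI01 | exact: negl_meas].
  have [Yc|nYc] := pselect (Y c).
    by rewrite (_ : [set _ | _] = setT) //; apply/seteqP; split.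
  by rewrite (_ : [set _ | _] = set0) //; apply/seteqP; split.
- apply: negl_meas; apply: negligibleS nZ; by move=> x [[]].
Qed.

Lemma meas_aecstE (f : R -> \bar R) (c : \bar R) (Z : set R) :
  (leb R).-negligible Z -> (forall x, I01 x -> ~ Z x -> f x = c) ->
  measurable_fun (I01 : set (LebT R)) (f : LebT R -> \bar R).
Proof.
move=> nZ Hf _ Y mY.
have -> : (I01 : set (LebT R)) `&` (f : LebT R -> \bar R) @^-1` Y =
   ((I01 `\` Z) `&` [set _ : LebT R | Y c]) `|` (I01 `&` Z `&` f @^-1` Y).
  apply/seteqP; split => x.
  - move=> [Ix Yx]; have [Zx|nZx] := pselect (Z x); first by right.
    by left; split; [split|] => //=; rewrite -(Hf x).
  - by case => [[[Ix nZx] Yc]|[[Ix Zx] Yx]]; split=> //; rewrite /preimage /= Hf.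
apply: measurableU.
- apply: measurableI; first by apply: measurableD; [exact: mI01 | exact: negl_meas].
  have [Yc|nYc] := pselect (Y c).
    by rewrite (_ : [set _ | _] = setT) //; apply/seteqP; split.
  by rewrite (_ : [set _ | _] = set0) //; apply/seteqP; split.
- apply: negl_meas; apply: negligibleS nZ; by move=> x [[]].
Qed.

Lemma meas_aecstR (f : R -> R) (c : R) (Z : set R) :
  (leb R).-negligible Z -> (forall x, I01 x -> ~ Z x -> f x = c) ->
  measurable_fun (I01 : set (LebT R)) (f : LebT R -> R).
Proof.
move=> nZ Hf _ Y mY.
have -> : (I01 : set (LebT R)) `&` (f : LebT R -> R) @^-1` Y =
   ((I01 `\` Z) `&` [set _ : LebT R | Y c]) `|` (I01 `&` Z `&` f @^-1` Y).
  apply/seteqP; split => x.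
  - move=> [Ix Yx]; have [Zx|nZx] := pselect (Z x); first by right.
    by left; split; [split|] => //=; rewrite -(Hf x).
  - by case => [[[Ix nZx] Yc]|[[Ix Zx] Yx]]; split=> //; rewrite /preimage /= Hf.
apply: measurableU.
- apply: measurableI; first by apply: measurableD; [exact: mI01 | exact: negl_meas].
  have [Yc|nYc] := pselect (Y c).
    by rewrite (_ : [set _ | _] = setT) //; apply/seteqP; split.
  by rewrite (_ : [set _ | _] = set0) //; apply/seteqP; split.
- apply: negl_meas; apply: negligibleS nZ; by move=> x [[]].
Qed.

Lemma aeq_negl (f g : R -> \bar R) (Z : set R) : (leb R).-negligible Z ->
  (forall x, I01 x -> ~ Z x -> f x = g x) -> ae_eq (leb R) (I01 : set (LebT R)) f g.
Proof.
move=> nZ Hf; apply: (negligibleS _ nZ) => x /= nx.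
apply: contrapT => Zx; apply: nx => I0x; exact: Hf.
Qed.

Lemma int_aecst (f : R -> \bar R) (c : R) (Z : set R) :
  (leb R).-negligible Z -> (forall x, I01 x -> ~ Z x -> f x = c%:E) ->
  int01 f = c%:E.
Proof.
move=> nZ Hf; rewrite /int01 (@ae_eq_integral _ _ _ (leb R) _ (cst c%:E)).
- rewrite integral_cst; last exact mI01.
  by rewrite -[RHS]mule1; congr (_ * _); exact leb01.
- exact: mI01.
- exact (meas_aecstE nZ Hf).
- exact: measurable_cst.
- exact (aeq_negl nZ Hf).
Qed.

Lemma integ_aecst (f : R -> \bar R) (c : R) (Z : set R) :
  (leb R).-negligible Z -> (forall x, I01 x -> ~ Z x -> f x = c%:E) ->
  leb_integrable f.
Proof.
move=> nZ Hf; apply/integrableP; split; first exact (meas_aecstE nZ Hf).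
have := @int_aecst (fun x => `|f x|) `|c| Z nZ.
rewrite /int01 => ->; first by rewrite ltry.
by move=> x Ix nZx; rewrite Hf.
Qed.
End P1.
Section P2. Variable R : realType.
Local Open Scope ereal_scope.

Lemma sepE (l v : \bar R) : (forall U, nbhs l U -> U v) -> l = v.
Proof.
move=> H.
have h1 : (fun _ : nat => v) @ \oo --> l.
  move=> U /= nU; rewrite /nbhs /=; exists 0%N => // n _ /=; exact: H.
have h2 : (fun _ : nat => v) @ \oo --> v by exact: cvg_cst.
exact: (@cvg_unique _ (@ereal_hausdorff R) _ _ _ _ h1 h2).
Qed.

Variables (I : Type) (lt : I -> I -> Prop).
Hypothesis ltT : forall x y z, lt x y -> lt y z -> lt x z.
Hypothesis tot : forall x y, [\/ x = y, lt x y | lt y x].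
Hypothesis nomax : forall a, exists b, lt a b.

Lemma above2 a b : exists c, lt a c /\ lt b c.
Proof.
have [<-|ab|ba] := tot a b.
- by have [c ac] := nomax a; exists c.
- have [c bc] := nomax b; exists c; split => //; exact: ltT ab bc.
- have [c ac] := nomax a; exists c; split => //; exact: ltT ba ac.
Qed.

Lemma kliminf_ev (u : I -> \bar R) v t : (forall a, lt t a -> u a = v) ->
  kliminf lt u = v.
Proof.
move=> Hu; rewrite /kliminf (_ : [set l | _] = [set v]) ?ereal_inf1 //.
apply/seteqP; split => l /=.
- move=> Hl; apply: sepE => U nU.
  have [a [ta Ua]] := Hl U nU t; by rewrite -(Hu a ta).
- move=> -> U nU a0; have [c [a0c tc]] := above2 a0 t.
  exists c; split => //; rewrite Hu //; exact: nbhs_singleton.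
Qed.

Lemma nkconv_ev (u : I -> \bar R) c d t : (forall a, lt t a -> u a = c) ->
  c <> d -> ~ kconv lt u d.
Proof.
move=> Hu cd Hk; apply: cd; apply: esym; apply: sepE => U nU.
have [a0 Ha0] := Hk U nU; have [e [a0e te]] := above2 a0 t.
by rewrite -(Hu e te); apply: Ha0.
Qed.

Lemma kconv_ev (T : topologicalType) (u : I -> T) v t : (forall a, lt t a -> u a = v) ->
  kconv lt u v.
Proof. move=> Hu U nU; exists t => a ta; rewrite Hu //; exact: nbhs_singleton. Qed.
End P2.
Section P3. Variable R : realType.

Lemma null_setS (A B : set R) : Defs.null_set B -> A `<=` B -> Defs.null_set A.
Proof. move=> [BI nB] AB; split; [exact: subset_trans BI| exact: negligibleS nB]. Qed.

Lemma null_setU (A B : set R) : Defs.null_set A -> Defs.null_set B -> Defs.null_set (A `|` B).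
Proof.
move=> [AI nA] [BI nB]; split; last exact: negligibleU.
by move=> x [/AI|/BI].
Qed.

Variables (I : Type) (lt : I -> I -> Prop).
Hypothesis Hwo : initial_well_order lt.
Hypothesis Hadd : is_addN R I.

Lemma seg_lt a : card_lt {j | lt j a} I.
Proof.
case: Hwo => _ _ _ _ H; split; last exact: H.
exists (@proj1_sig _ _) => -[x px] [y py] /= exy; subst y.
by congr exist; apply: Prop_irrelevance.
Qed.

Definition Mset (N : I -> set R) a : set R :=
  (\bigcup_(j : {j | lt j a}) N (proj1_sig j)) `|` N a.

Lemma Mset_null N a : (forall i, Defs.null_set (N i)) -> Defs.null_set (Mset N a).
Proof.
move=> HN; apply: null_setU => //.
exact: (Hadd.2 _ (fun j : {j | lt j a} => N (proj1_sig j)) (seg_lt a)).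
Qed.

Lemma nomax a : exists b, lt a b.
Proof.
apply: contrapT => nb.
case: Hadd => -[N' [HN' nN']] _; apply: nN'.
apply: (null_setS (Mset_null a HN')) => x [i _ Nix].
case: Hwo => _ _ tot _ _.
have [ia|ia|ai] := tot i a.
- by subst i; right.
- by left; exists (exist _ i ia).
- by exfalso; apply: nb; exists i.
Qed.

Lemma inhI : exists a : I, True.
Proof.
case: Hadd => -[N' [HN' nN']] _; apply: contrapT => nI; apply: nN'.
rewrite (_ : \bigcup_i N' i = set0); first by split => //; exact: negligible_set0.
by apply/seteqP; split => x // [i]; exfalso; apply: nI; exists i.
Qed.

Lemma Mset_mono N a b : lt a b -> Mset N a `<=` Mset N b.
Proof.
case: Hwo => _ ltT _ _ _ ab x [[[j ja] _ Njx]|Nax]; left.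
- by exists (exist _ j (ltT _ _ _ ja ab)).
- by exists (exist _ a ab).
Qed.

Lemma Mset_cov N x : I01 `<=` \bigcup_i N i -> I01 x ->
  exists t, forall a, lt t a -> Mset N a x.
Proof.
move=> cov /cov [t _ Ntx]; exists t => a ta; left.
by exists (exist _ t ta).
Qed.
End P3.
Section P4. Variable R : realType.
Definition w (n : nat) : R := 2 / 4 ^+ n.+1.
Definition T (n : nat) : R := 2 / (3 * 4 ^+ n).
Lemma T_ge0 n : 0 <= T n.
Proof. by rewrite /T divr_ge0 // mulr_ge0 // exprn_ge0. Qed.
Lemma w_ge0 n : 0 <= w n.
Proof. by rewrite /w divr_ge0 // exprn_ge0. Qed.
Lemma wT n : w n = T n - T n.+1.
Proof.
have h : (4 : R) ^+ n != 0 by rewrite expf_neq0 // pnatr_eq0.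
rewrite /w /T !exprS; field; rewrite ?mulf_neq0 ?pnatr_eq0 //.
Qed.
Lemma Tw n : T n.+1 < w n.
Proof.
have h : (0 : R) < 4 ^+ n.+1 by rewrite exprn_gt0.
rewrite /w /T ltr_pdivrMr ?mulr_gt0 //.
have -> : 2 / 4 ^+ n.+1 * (3 * 4 ^+ n.+1) = 6 :> R.
  by field; rewrite gt_eqF.
lra.
Qed.

Definition ps (s : nat -> bool) N : R := \sum_(i < N) (if s i then w i else 0).
Lemma psS s N : ps s N.+1 = ps s N + (if s N then w N else 0).
Proof. by rewrite /ps big_ord_recr. Qed.
Lemma term_ge0 s n : 0 <= (if s n then w n else 0 : R).
Proof. by case: ifP => // _; exact: w_ge0. Qed.
Lemma ps_ge0 s N : 0 <= ps s N.
Proof. by rewrite /ps sumr_ge0 // => i _; exact: term_ge0. Qed.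
Lemma ps_up s N k : ps s (N + k) <= ps s N + T N - T (N + k).
Proof.
elim: k => [|k IH]; first by rewrite addn0 addrK.
rewrite addnS psS (wT (N + k)).
have : (if s (N + k) then w (N + k) else 0) <= w (N + k).
  by case: ifP => // _; exact: w_ge0.
rewrite wT; set t := (if _ then _ else _) => h; lra.
Qed.
Lemma ps_mono s N k : ps s N <= ps s (N + k).
Proof.
elim: k => [|k IH]; first by rewrite addn0.
by rewrite addnS psS (le_trans IH) // lerDl term_ge0.
Qed.
Lemma ps_bound s N M : ps s M <= ps s N + T N.
Proof.
have [NM|MN] := leqP N M.
  rewrite -(subnKC NM); apply: (le_trans (ps_up _ _ _)).
  by rewrite lerBlDr lerDl T_ge0.
apply: (le_trans (y := ps s N)); last by rewrite lerDl T_ge0.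
by rewrite -(subnKC (ltnW MN)) ps_mono.
Qed.

Definition psi s := sup (range (ps s)).
Lemma psi_hs s : has_sup (range (ps s)).
Proof.
split; first by exists (ps s 0); exists 0%N.
by exists (ps s 0 + T 0) => _ [M _ <-]; exact: ps_bound.
Qed.
Lemma psi_ge s N : ps s N <= psi s.
Proof. by apply: sup_upper_bound; [exact: psi_hs| exists N]. Qed.
Lemma psi_le s N : psi s <= ps s N + T N.
Proof.
by apply: ge_sup; [exists (ps s 0); exists 0%N| move=> _ [M _ <-]; exact: ps_bound].
Qed.

Lemma psi_lt s t N : (forall i, (i < N)%N -> s i = t i) -> s N = true -> t N = false ->
  psi t < psi s.
Proof.
move=> st sN tN.
have e : ps s N = ps t N by apply: eq_bigr => i _; rewrite st.
have h1 := psi_ge s N.+1; have h2 := psi_le t N.+1.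
rewrite psS sN in h1; rewrite psS tN addr0 in h2.
have h3 := Tw N; lra.
Qed.

Lemma psi_inj : injective psi.
Proof.
move=> s t e; apply: contrapT => st.
have ex : exists n, s n != t n.
  apply: contrapT => h; apply: st; apply/funext => n.
  by apply/eqP; apply: contrapT => /negP hn; apply: h; exists n.
case: (ex_minnP ex) => N sNt Hmin.
have below i : (i < N)%N -> s i = t i.
  move=> iN; apply/eqP; apply: contrapT => /negP hi.
  by have := Hmin i hi; rewrite leqNgt iN.
move: sNt; case sN: (s N); case tN: (t N) => // _.
- by have := psi_lt below sN tN; rewrite e ltxx.
- have := @psi_lt t s N (fun i iN => esym (below i iN)) tN sN.
  by rewrite e ltxx.
Qed.

Lemma psi_I01 s : I01 (psi s).
Proof.
rewrite /= in_itv /=; apply/andP; split.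
  exact: le_trans (ps_ge0 s 0) (psi_ge s 0).
apply: (le_trans (psi_le s 0)); rewrite /ps big_ord0 add0r /T expr0 mulr1.
by rewrite ler_pdivrMr // mul1r ler_nat.
Qed.
Fixpoint L (N : nat) : seq R :=
  if N is N'.+1 then L N' ++ [seq y + w N' | y <- L N'] else [:: 0].
Lemma ps_in s N : ps s N \in L N.
Proof.
elim: N => [|N IH]; first by rewrite /ps big_ord0 mem_seq1.
rewrite psS /= mem_cat; case: (s N).
  by rewrite (map_f (fun y => y + w N) IH) orbT.
by rewrite addr0 IH.
Qed.
Lemma size_L N : size (L N) = (2 ^ N)%N.
Proof. by elim: N => // N IH; rewrite /= size_cat size_map IH expnS mul2n addnn. Qed.

Definition Uset (Ls : seq R) (e : R) : set R :=
  [set x | exists2 y, y \in Ls & y <= x <= y + e].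

Notation muo := ((@wlength R idfun)^*%mu).

Lemma mu_itv (y e : R) : 0 <= e -> (muo [set x : R | (y <= x <= y + e)%R] <= e%:E)%E.
Proof.
move=> e0.
have h : muo [set` `[y, y + e]] = (if (y%:E < (y + e)%:E)%E then ((y + e)%:E - y%:E)%E else 0%E)
  := lebesgue_measure_itv _.
have -> : [set x | y <= x <= y + e] = [set` `[y, y + e]].
  by apply/seteqP; split => x /=; rewrite in_itv.
rewrite h; case: ifP => _; last by rewrite lee_fin.
by rewrite -EFinB addrC addKr.
Qed.

Lemma mu_U (Ls : seq R) (e : R) : 0 <= e -> (muo (Uset Ls e) <= ((size Ls)%:R * e)%:E)%E.
Proof.
move=> e0; elim: Ls => [|y Ls IH].
  rewrite (_ : Uset [::] e = set0) ?outer_measure0 ?mul0r //.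
  by apply/seteqP; split => x // [].
apply: (@le_trans _ _ (muo ([set x | y <= x <= y + e] `|` Uset Ls e))).
  apply: le_outer_measure => x [z]; rewrite inE => /orP[/eqP ->|zL] h.
    by left.
  by right; exists z.
apply: (le_trans (outer_measureU2 _ _ _)).
rewrite /= -nat1r mulrDl mul1r EFinD; apply: leeD => //; exact: mu_itv.
Qed.

Lemma range_psi_sub N : range psi `<=` Uset (L N) (T N).
Proof.
move=> _ [s _ <-]; exists (ps s N); first exact: ps_in.
by rewrite psi_ge psi_le.
Qed.

Lemma mu_range0 : muo (range psi) = 0%E.
Proof.
apply/eqP; rewrite eq_le outer_measure_ge0 andbT.
apply/lee_addgt0Pr => e e0; rewrite add0e.
have [N HN] : exists N : nat, 1 / e < N%:R.
  exists (Num.Def.archi_bound (1 / e)); apply: archi_boundP.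
  by rewrite divr_ge0 // ltW.
apply: (@le_trans _ _ (muo (Uset (L N) (T N)))).
  apply: le_outer_measure; exact: range_psi_sub.
apply: (le_trans (mu_U _ (T_ge0 N))); rewrite lee_fin size_L.
have h4 : (4 : R) ^+ N = 2 ^+ N * 2 ^+ N by rewrite -exprMn; congr (_ ^+ _); lra.
have hN : (N%:R : R) <= 2 ^+ N.
  by rewrite -natrX ler_nat ltnW // ltn_expl.
have h2 : (0 : R) < 2 ^+ N by rewrite exprn_gt0.
rewrite natrX /T h4.
have -> : 2 ^+ N * (2 / (3 * (2 ^+ N * 2 ^+ N))) = 2 / (3 * 2 ^+ N) :> R.
  by field; rewrite gt_eqF.
rewrite ler_pdivrMr ?mulr_gt0 //.
have : 1 < e * N%:R by rewrite -ltr_pdivrMl // mulr1 -div1r.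
have h5 : e * N%:R <= e * 2 ^+ N by rewrite ler_wpM2l // ltW.
rewrite mulrCA; lra.
Qed.
End P4.
Section P5. Variable R : realType.
Variable psi : (nat -> bool) -> R.
Hypothesis psi_inj : injective psi.

Definition cut (x : R) (n : nat) : bool :=
  if @unpickle rat n is Some q then ratr q < x else false.

Lemma cut_lt (x y : R) : x < y -> cut x <> cut y.
Proof.
move=> xy; have [q] := rat_in_itvoo xy; rewrite in_itv /= => /andP[xq qy] e.
have := congr1 (fun f => f (pickle q)) e; rewrite /cut pickleK /=.
by rewrite qy ltNge (ltW xq).
Qed.

Lemma cut_inj : injective cut.
Proof.
move=> x y e; have [xy|yx|//] := ltgtP x y.
- by have := cut_lt xy.
- by have := cut_lt yx; rewrite e.
Qed.

Definition fl (q : nat -> nat -> bool) : nat -> bool :=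
  fun n => q (Cantor.of_nat n).1 (Cantor.of_nat n).2.

Lemma fl_inj : injective fl.
Proof.
move=> q q' e; apply/funext => i; apply/funext => j.
have := congr1 (fun f => f (Cantor.to_nat (i, j))) e.
by rewrite /fl Cantor.cancel_of_to.
Qed.

Definition Good (A : set R) (q : nat -> nat -> bool) : Prop :=
  forall i y, (forall j, cut y j = q i j.+1) -> (A y <-> q i 0%N = true).

Definition yy (A0 : set R) (C : nat -> set R) (i : nat) : R :=
  xget 0 (fun y => ~ (A0 y <-> C i y)).

Definition pt (A0 : set R) (C : nat -> set R) : nat -> nat -> bool :=
  fun i j => if j is j'.+1 then cut (yy A0 C i) j' else `[< A0 (yy A0 C i) >].

Definition ev (A : set R) (x : R) : R :=
  if `[< exists q, psi (fl q) = x /\ Good A q >] then 1 else 0.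

Lemma ev_supp A x : ev A x != 0 -> range psi x.
Proof.
rewrite /ev; case: asboolP => [[q [<- _]] _|]; last by rewrite eqxx.
by exists (fl q).
Qed.

Lemma pt_good A0 C : Good A0 (pt A0 C).
Proof.
move=> i y Hy; have ey : y = yy A0 C i.
  apply: cut_inj; apply/funext => j; exact: Hy.
rewrite /pt -ey; split => [h|/asboolP //]; exact/asboolP.
Qed.

Lemma pt_bad A0 C i : C i <> A0 -> ~ Good (C i) (pt A0 C).
Proof.
move=> CA G.
have ex : exists y, ~ (A0 y <-> C i y).
  apply: contrapT => h; apply: CA; apply/funext => y; apply/propext.
  by split => ?; apply: contrapT => h'; apply: h; exists y; tauto.
have := xgetPex 0 ex; rewrite -/(yy A0 C i) => hy.
have := G i (yy A0 C i) (fun j => erefl); rewrite /pt => h.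
have h2 : A0 (yy A0 C i) <-> `[< A0 (yy A0 C i) >] = true.
  by split => [?|/asboolP //]; exact/asboolP.
tauto.
Qed.

Lemma point A0 (C : nat -> set R) : exists x, [/\ range psi x, ev A0 x = 1 &
  forall i, C i <> A0 -> ev (C i) x = 0].
Proof.
exists (psi (fl (pt A0 C))); split.
- by exists (fl (pt A0 C)).
- rewrite /ev; case: asboolP => // -[]; exists (pt A0 C); split => //.
  exact: pt_good.
- move=> i CA; rewrite /ev; case: asboolP => // -[q [/psi_inj/fl_inj -> G]].
  by have := pt_bad CA.
Qed.
End P5.
Section P6. Variable R : realType.
Local Open Scope ereal_scope.
Variables (I : Type) (lt : I -> I -> Prop).
Hypothesis ltT : forall x y z, lt x y -> lt y z -> lt x z.
Hypothesis tot : forall x y, [\/ x = y, lt x y | lt y x].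
Hypothesis nomax : forall a, exists b, lt a b.
Variable t0 : I.
Variable M : I -> set R.
Hypothesis Mneg : forall a, (leb R).-negligible (M a).
Hypothesis Mmono : forall a b, lt a b -> M a `<=` M b.
Hypothesis Mcov : forall x, I01 x -> exists t, forall a, lt t a -> M a x.
Variable D : set R.
Hypothesis Dneg : (leb R).-negligible D.

Definition ind a x : R := if `[< M a x >] then 1%R else 0%R.

Definition P1 (F : I -> R -> R) (s : R) :=
  forall a x, I01 x -> ~ D x -> F a x = (s * ind a x)%R.

Variables (F : I -> R -> R) (s : R).
Hypothesis s0 : (0 < s)%R.
Hypothesis HF : P1 F s.

Lemma ind0 a x : ~ M a x -> ind a x = 0%R.
Proof. by rewrite /ind; case: asboolP. Qed.
Lemma ind1 a x : M a x -> ind a x = 1%R.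
Proof. by rewrite /ind; case: asboolP. Qed.

Lemma F0 a x : I01 x -> ~ (D `|` M a) x -> F a x = 0%R.
Proof. by move=> Ix nx; rewrite HF // ?ind0 ?mulr0 // => ?; apply: nx; [right|left]. Qed.

Lemma Fs x : I01 x -> ~ D x -> exists t, forall a, lt t a -> F a x = s.
Proof.
move=> Ix nDx; have [t Ht] := Mcov Ix; exists t => a ta.
by rewrite HF // ind1 ?mulr1 //; exact: Ht.
Qed.

Lemma DMneg a : (leb R).-negligible (D `|` M a).
Proof. exact: negligibleU. Qed.

Lemma Fmeas a : leb_measurable (F a).
Proof. exact: (meas_aecstR (DMneg a) (F0 (a := a))). Qed.

Lemma intF0 a : int01 (EFin \o F a) = 0.
Proof. by apply: (int_aecst (DMneg a)) => x Ix nx /=; rewrite F0. Qed.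

Lemma cst_integ : leb_integrable (EFin \o (fun _ : R => s)).
Proof. by apply: (integ_aecst (c := s) (negligible_set0 _)). Qed.

Lemma cst_int : int01 (EFin \o (fun _ : R => s)) = s%:E.
Proof. by apply: (int_aecst (c := s) (negligible_set0 _)). Qed.

Lemma aeconv : ae01 (fun x => kconv lt (fun a => F a x) s).
Proof.
apply: (aeI Dneg) => x Ix nDx; have [t Ht] := Fs Ix nDx.
exact: (kconv_ev Ht).
Qed.

Lemma NM_of : NM lt F.
Proof.
split; first exact: Fmeas.
- move=> a b ab; apply: (aeI Dneg) => x Ix nDx; rewrite !HF //.
  rewrite /ind; case: asboolP => Ma; case: asboolP => Mb; rewrite ?mulr1 ?mulr0 ?lexx ?ltW //=.
  exfalso; apply: Mb; case: ab => [<-//|ab]; exact: Mmono Ma.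
exists (fun _ => s); split.
- exact: cst_integ.
- exact: aeconv.
- rewrite cst_int; apply: (@nkconv_ev R _ _ ltT tot nomax _ 0 _ t0).
  + by move=> a _; rewrite intF0.
  + by move=> /eqP; rewrite eq_sym eqe gt_eqF.
Qed.

Lemma NF_of : NF lt F.
Proof.
split; first exact: Fmeas.
- move=> a; apply: (aeI Dneg) => x Ix nDx; rewrite HF // /ind.
  by case: asboolP => _; rewrite ?mulr1 ?mulr0 // ltW.
- apply: (integ_aecst (c := s) Dneg) => x Ix nDx.
  have [t Ht] := Fs Ix nDx.
  by apply: (@kliminf_ev R _ _ ltT tot nomax _ _ t) => a ta; rewrite Ht.
- rewrite (_ : int01 _ = s%:E).
    rewrite (@kliminf_ev R _ _ ltT tot nomax _ 0 t0) ?lte_fin //.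
    by move=> a _; rewrite intF0.
  apply: (int_aecst Dneg) => x Ix nDx.
  have [t Ht] := Fs Ix nDx.
  by apply: (@kliminf_ev R _ _ ltT tot nomax _ _ t) => a ta; rewrite Ht.
Qed.

Lemma ND_of : ND lt F.
Proof.
split; first exact: Fmeas.
- exists (fun _ => s); split; first exact: cst_integ.
  move=> a; apply: (aeI Dneg) => x Ix nDx; rewrite HF // /ind.
  by case: asboolP => _; rewrite ?mulr1 ?mulr0 ?normr0; [rewrite gtr0_norm | exact: ltW].
exists (fun _ => s); split.
- exact: cst_integ.
- exact: aeconv.
- apply: (@nkconv_ev R _ _ ltT tot nomax _ s%:E _ t0).
  + move=> a _; apply: (int_aecst (DMneg a)) => x Ix nx.
    by rewrite F0 // sub0r normrN gtr0_norm.
  + by move=> /eqP; rewrite eqe gt_eqF.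
Qed.
End P6.
Section P7. Variable R : realType.
Variables (I : Type) (lt : I -> I -> Prop).
Variable t0 : I.
Variable M : I -> set R.
Let D : set R := range (psi R).
Lemma Dneg : (leb R).-negligible D.
Proof. exact: outer0_negl (mu_range0 R). Qed.
Lemma DI01 x : D x -> I01 x.
Proof. by move=> [s _ <-]; exact: psi_I01. Qed.

Definition base a x : R := if `[< I01 x /\ ~ D x /\ M a x >] then 1 else 0.
Definition bf (A : set R) : I -> R -> R := fun a x => base a x + ev (psi R) A x.

Lemma ev0 A x : ~ D x -> ev (psi R) A x = 0.
Proof. by move=> nD; apply/eqP; apply: contrapT => /negP /ev_supp. Qed.

Lemma bf_out A a x : ~ I01 x -> bf A a x = 0.
Proof.
move=> nI; rewrite /bf ev0; last by move/DI01/nI.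
by rewrite /base addr0; case: asboolP => // -[/nI].
Qed.

Lemma bf_in A a x : I01 x -> ~ D x -> bf A a x = ind M a x.
Proof.
move=> Ix nD; rewrite /bf ev0 // addr0 /base /ind.
by case: asboolP => [[_ [_ ?]]|h]; case: asboolP => // Ma; exfalso; apply: h.
Qed.

Lemma bf_D A a x : D x -> bf A a x = ev (psi R) A x.
Proof. by move=> Dx; rewrite /bf /base; case: asboolP => [[_ []]|] //; rewrite add0r. Qed.

Lemma bf_inj : injective bf.
Proof.
move=> A A' e; apply: contrapT => AA.
have [x [Dx e1 e2]] := point (@psi_inj R) A (fun _ => A').
have h2 := e2 0%N (fun h => AA (esym h)).
have := congr1 (fun f => f t0 x) e; rewrite /= !bf_D // e1 h2.
by move=> /eqP; rewrite oner_eq0.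
Qed.

Lemma bf_comb n (b : 'I_n -> I -> R -> R) (c : 'I_n -> R) :
  (forall k, range bf (b k)) ->
  P1 M D (fun a x => \sum_(k < n) c k * b k a x) (\sum_(k < n) c k).
Proof.
move=> Bb a x Ix nD; rewrite mulr_suml; apply: eq_bigr => k _.
by have [A _ <-] := Bb k; rewrite bf_in.
Qed.

Lemma bf_pos_coneable (S : (I -> R -> R) -> Prop) :
  (forall F s, 0 < s -> P1 M D F s -> S F) -> pos_coneable_2c S.
Proof.
move=> HS; exists (range bf); split.
- by move=> _ [A _ <-] a x nI; exact: bf_out.
- split.
  + exists (fun b : {b | range bf b} => s2val (cid2 (proj2_sig b))).
    move=> [b1 p1] [b2 p2] /= e.
    have e' : b1 = b2.
      case: (cid2 p1) e => A1 /= _ h1; case: (cid2 p2) => A2 /= _ h2 e.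
      by rewrite -h1 -h2 e.
    by subst b2; congr exist; apply: Prop_irrelevance.
  + exists (fun A => exist (range bf) (bf A) (ex_intro2 _ _ A Logic.I erefl)).
    move=> A A' e; apply: bf_inj; exact: (congr1 (@proj1_sig _ _) e).
- move=> n b c binj Bb e k.
  have hA : forall j, exists A, bf A = b j.
    by move=> j; have [A _ ?] := Bb j; exists A.
  pose A j := proj1_sig (cid (hA j)).
  have HA j : bf (A j) = b j by rewrite /A; case: cid.
  pose C (i : nat) : set R := if @insub _ (fun i => (i < n)%N) 'I_n i is Some j then A j else A k.
  have [x [Dx e1 e2]] := point (@psi_inj R) (A k) C.
  have := congr1 (fun f => f t0 x) e => /=.
  rewrite (bigD1 k) //= -HA bf_D // e1 mulr1 big1 ?addr0 //.
  move=> j jk; rewrite -HA bf_D // (_ : ev _ _ _ = 0) ?mulr0 //.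
  have -> : A j = C (val j) by rewrite /C valK.
  apply: e2; rewrite /C valK => AA.
  by move/eqP: jk; apply; apply: binj; rewrite -!HA AA.
- move=> n b c binj Bb cpos; apply: (HS _ _ _ (bf_comb c Bb)).
  rewrite big_ord_recl; apply: ltr_pwDl => //.
  by apply: sumr_ge0 => i _; apply: ltW.
Qed.
End P7.
Unset Implicit Arguments.
Theorem mainTheorem8 (R : realType) (I : Type) (lt : I -> I -> Prop)
  (Hwo : initial_well_order lt) (Hadd : is_addN R I) (Hcov : is_covN R I) :
  [/\ pos_coneable_2c (@NM R I lt), pos_coneable_2c (@NF R I lt) &
      pos_coneable_2c (@ND R I lt)].
Proof.
have [_ ltT tot _ _] := Hwo.
have nm := nomax Hwo Hadd.
have [t0 _] := inhI Hadd.
case: Hcov => -[N [HN cov]] _.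
pose M := Mset lt N.
have Mneg a : (leb R).-negligible (M a) := (Mset_null Hwo Hadd a HN).2.
have Mmono a b : lt a b -> M a `<=` M b := @Mset_mono _ _ _ Hwo N a b.
have Mcov x : I01 x -> exists t, forall a, lt t a -> M a x := Mset_cov lt cov.
split; apply: (bf_pos_coneable t0 (M:=M)) => F s s0 HF.
- exact: (NM_of ltT tot nm t0 Mneg Mmono Mcov (Dneg R) s0 HF).
- exact: (NF_of ltT tot nm t0 Mneg Mcov (Dneg R) s0 HF).
- exact: (ND_of ltT tot nm t0 Mneg Mcov (Dneg R) s0 HF).
Qed.
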